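(* Let $\alpha\in[0,1)$ and let $n\geq f(\alpha)$ be an integer. Then $\theta(n)<\eta(n)$.
   Context: Define $f(\alpha)=14$ if $\alpha\in[0,\frac12]$, $f(\alpha)=17$ if $\alpha\in(\frac12,\frac23]$, $f(\alpha)=20$ if $\alpha\in(\frac23,\frac34]$, and $f(\alpha)=\frac{5}{1-\alpha}+1$ if $\alpha\in(\frac34,1)$. $\theta(n)$ is the largest root of $x^{3}-((\alpha+1)n+\alpha-5)x^{2}+(\alpha n^{2}+(\alpha^{2}-3\alpha-1)n-2\alpha+1)x-\alpha^{2}n^{2}+(7\alpha^{2}-5\alpha+3)n-18\alpha^{2}+29\alpha-15=0$, and $\eta(n)$ is the largest root of $x^{3}-((\alpha+1)n+\alpha-4)x^{2}+(\alpha n^{2}+(\alpha^{2}-2\alpha-1)n-2\alpha+1)x-\alpha^{2}n^{2}+(5\alpha^{2}-3\alpha+2)n-10\alpha^{2}+15\alpha-8=0$. *)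

(* Defs.v *)
From Stdlib Require Import Reals Lra.
Open Scope R_scope.

(* f(alpha) from the paper; only meaningful for alpha in [0,1). *)
Definition fbound (a : R) : R :=
  if Rle_dec a (1/2) then 14
  else if Rle_dec a (2/3) then 17
  else if Rle_dec a (3/4) then 20
  else 5 / (1 - a) + 1.

(* The cubic whose largest root is theta(n). *)
Definition Ptheta (a n x : R) : R :=
  x^3 - ((a+1)*n + a - 5) * x^2
  + (a*n^2 + (a^2 - 3*a - 1)*n - 2*a + 1) * x
  - a^2*n^2 + (7*a^2 - 5*a + 3)*n - 18*a^2 + 29*a - 15.

(* The cubic whose largest root is eta(n). *)
Definition Peta (a n x : R) : R :=
  x^3 - ((a+1)*n + a - 4) * x^2
  + (a*n^2 + (a^2 - 2*a - 1)*n - 2*a + 1) * x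
  - a^2*n^2 + (5*a^2 - 3*a + 2)*n - 10*a^2 + 15*a - 8.

Definition is_largest_root (p : R -> R) (r : R) : Prop :=
  p r = 0 /\ forall x, p x = 0 -> x <= r.

(* Main.v *)
Require Import Defs.
From Stdlib Require Import Reals Lra Psatz.
Open Scope R_scope.
Lemma A1 a N : 0 <= a < 1 -> 14 <= N -> 5 <= (1-a)*N -> Ptheta a N (N-5) < 0.
Proof. intros. unfold Ptheta. nra. Qed.
Lemma A2 a N t : 0 <= a < 1 -> 14 <= N -> 0 <= t -> 0 < Ptheta a N (N+t).
Proof. intros. unfold Ptheta.
 replace ((N + t) ^ 3 - ((a + 1) * N + a - 5) * (N + t) ^ 2 +
 (a * N ^ 2 + (a ^ 2 - 3 * a - 1) * N - 2 * a + 1) * (N + t) - a ^ 2 * N ^ 2 +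
 (7 * a ^ 2 - 5 * a + 3) * N - 18 * a ^ 2 + 29 * a - 15) with
 (t^3 + ((2-a)*N - a + 5) * t^2 + ((1-a)*N^2 + (a^2-5*a+9)*N - 2*a+1) * t
  + (4*(1-a)*N^2 + (7*a^2-7*a+4)*N -18*a^2+29*a-15)) by ring.
 assert (0 < (1-a)*N*N) by (apply Rmult_lt_0_compat; nra).
 assert (0 <= t^3) by (apply pow_le; lra).
 assert (0 <= ((2-a)*N - a + 5) * t^2) by (apply Rmult_le_pos; [nra| apply pow2_ge_0]).
 assert (0 <= ((1-a)*N^2 + (a^2-5*a+9)*N - 2*a+1) * t) by (apply Rmult_le_pos; nra).
 nra. Qed.
Lemma A3 a N : 0 <= a < 1 -> 14 <= N -> 0 < Peta a N N.
Proof. intros. unfold Peta.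
 replace (N ^ 3 - ((a + 1) * N + a - 4) * N ^ 2 + (a * N ^ 2 + (a ^ 2 - 2 * a - 1) * N - 2 * a + 1) * N -
 a ^ 2 * N ^ 2 + (5 * a ^ 2 - 3 * a + 2) * N - 10 * a ^ 2 + 15 * a - 8) with
 (3*(1-a)*N^2 + (5*a^2-5*a+3)*N -10*a^2+15*a-8) by ring.
 assert (0 < (1-a)*N^2) by (apply Rmult_lt_0_compat; nra).
 assert (0 <= (a-1/2)^2*N) by (apply Rmult_le_pos; [apply pow2_ge_0|lra]).
 assert (a^2 <= 1) by nra.
 nra. Qed.
Lemma A4 a N x : 0 <= a < 1 -> 14 <= N -> a*N < x -> Ptheta a N x = 0 -> Peta a N x < 0.
Proof. intros H H0 H1 H2.
 assert (E: Peta a N x = Ptheta a N x - x*(x-a*N) + ((-2*a^2+2*a-1)*N + 8*a^2-14*a+7)) by (unfold Ptheta, Peta; ring).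
 rewrite E, H2.
 assert (0 < x*(x-a*N)) by (apply Rmult_lt_0_compat; nra).
 assert (0 <= (2*a^2-2*a+1)*(N-14)) by (apply Rmult_le_pos; nra).
 nra. Qed.
Lemma C a b c d : continuity (fun x => x^3 - a*x^2 + b*x + c + d).
Proof. reg. Qed.

Lemma contP a N : continuity (Ptheta a N).
Proof. unfold Ptheta. reg. Qed.
Lemma contQ a N : continuity (Peta a N).
Proof. unfold Peta. reg. Qed.

Lemma bounds a n : 0 <= a < 1 -> fbound a <= INR n -> 14 <= INR n /\ 5 <= (1-a)*INR n.
Proof. intros Ha. unfold fbound.
 destruct (Rle_dec a (1/2)); [intros; split; nra|].
 destruct (Rle_dec a (2/3)); [intros; split; nra|].
 destruct (Rle_dec a (3/4)); [intros; split; nra|].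
 intros H. assert (Hu : 0 < 1 - a) by lra.
 assert (E: 5 / (1-a) * (1-a) = 5) by (field; lra).
 assert (5/(1-a) * (1-a) <= (INR n - 1)*(1-a)) by (apply Rmult_le_compat_r; lra).
 assert (20 < 5/(1-a)).
 { apply (Rmult_lt_reg_r (1-a)); [lra|]. rewrite E. lra. }
 split; nra.
Qed.

Theorem mainTheorem3 (a : R) (n : nat) (theta eta : R) :
  0 <= a < 1 ->
  fbound a <= INR n ->
  is_largest_root (Ptheta a (INR n)) theta ->
  is_largest_root (Peta a (INR n)) eta ->
  theta < eta.
Proof.
  intros Ha Hf [Pt Ht] [Pe He].
  destruct (bounds a n Ha Hf) as [H14 H5]. set (N := INR n) in *.
  destruct (IVT (Ptheta a N) (N-5) N (contP a N)) as [z [[z1 z2] z3]].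
  - lra.
  - apply A1; lra.
  - pose proof (A2 a N 0 Ha H14 ltac:(lra)) as h. rewrite Rplus_0_r in h. exact h.
  - assert (Hz : N - 5 < z). { destruct z1 as [z1|z1]; auto. subst z. pose proof (A1 a N Ha H14 H5). lra. }
    pose proof (Ht z z3) as Hzt.
    assert (HtN : theta < N).
    { destruct (Rlt_le_dec theta N) as [h|h]; auto.
      pose proof (A2 a N (theta - N) Ha H14 ltac:(lra)). replace (N + (theta - N)) with theta in H by ring. lra. }
    assert (Qt : Peta a N theta < 0) by (apply A4; auto; nra).
    destruct (IVT (Peta a N) theta N (contQ a N) HtN Qt (A3 a N Ha H14)) as [w [[w1 w2] w3]].
    pose proof (He w w3).
    destruct w1 as [w1|w1]; [lra|]. subst w. lra.
Qed.
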